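(* Consider Markovian SIR dynamics on a tree network $D$ with independent initial node states. Then for all $i,j\in V$ and all $t\ge0$ the following hold exactly: $$\frac{d}{dt}\langle S_i\rangle=-\sum_{j=1}^N T_{ij}\langle S_iI_j\rangle,\qquad \frac{d}{dt}\langle I_i\rangle=\sum_{j=1}^N T_{ij}\langle S_iI_j\rangle-\gamma_i\langle I_i\rangle,$$ $$\frac{d}{dt}\langle S_iI_j\rangle=\sum_{k\neq i}T_{jk}\frac{\langle S_iS_j\rangle\langle S_jI_k\rangle}{\langle S_j\rangle}-\sum_{k\neq j}T_{ik}\frac{\langle S_iI_k\rangle\langle S_iI_j\rangle}{\langle S_i\rangle}-T_{ij}\langle S_iI_j\rangle-\gamma_j\langle S_iI_j\rangle,$$ $$\frac{d}{dt}\langle S_iS_j\rangle=-\sum_{k\neq j}T_{ik}\frac{\langle S_iS_j\rangle\langle S_iI_k\rangle}{\langle S_i\rangle}-\sum_{k\neq i}T_{jk}\frac{\langle S_iS_j\rangle\langle S_jI_k\rangle}{\langle S_j\rangle},$$ where a fraction whose denominator vanishes is interpreted as $0$.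
   Context: $D=(V,A)$ is a directed graph on $V=\{1,\dots,N\}$, with rates $T_{ij}\ge0$, $T_{ij}>0$ iff $(j,i)\in A$, $T_{ii}=0$, and removal rates $\gamma_i>0$. Markovian SIR dynamics: continuous-time Markov chain on $\{S,I,R\}^V$; while $j$ is infectious it makes infectious contacts to $i$ by a Poisson process of rate $T_{ij}$; a susceptible node receiving an infectious contact immediately becomes infectious; infectious node $i$ becomes removed at rate $\gamma_i$; $R$ is absorbing. The node states at time $0$ are mutually independent. $S_i,I_i$ are indicators that node $i$ is susceptible/infectious at time $t$, $\langle\cdot\rangle$ is expectation, and products denote joint indicators. $D$ is a tree network if its underlying undirected graph (obtained by replacing every arc by an undirected edge) is a tree or a forest. *)

(* Defs.v *)
From Stdlib Require Import Reals List Arith.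
Import ListNotations.
Open Scope R_scope.

Inductive st : Type := Sus | Inf | Rem.

Definition st_eq_dec (a b : st) : {a = b} + {a <> b}.
Proof. decide equality. Defined.

(* A configuration is a list of node states; node i (0 <= i < N) has state
   [nth i x Rem]. *)
Definition config := list st.

Definition config_eq_dec : forall x y : config, {x = y} + {x <> y} :=
  list_eq_dec st_eq_dec.

Definition node (x : config) (i : nat) : st := nth i x Rem.

Fixpoint all_configs (N : nat) : list config :=
  match N with
  | O => [ [] ]
  | S n => flat_map (fun c => [Sus :: c; Inf :: c; Rem :: c]) (all_configs n)
  end.

Fixpoint upd (x : config) (i : nat) (s : st) : config :=
  match x, i with
  | [], _ => []
  | _ :: x', O => s :: x'
  | a :: x', S i' => a :: upd x' i' s
  end.

Definition sumV (N : nat) (f : nat -> R) : R :=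
  fold_right Rplus 0 (map f (seq 0 N)).

Definition sumC (N : nat) (f : config -> R) : R :=
  fold_right Rplus 0 (map f (all_configs N)).

Definition indS (i : nat) (x : config) : R :=
  match node x i with Sus => 1 | _ => 0 end.
Definition indI (i : nat) (x : config) : R :=
  match node x i with Inf => 1 | _ => 0 end.

Definition inf_rate (N : nat) (T : nat -> nat -> R) (x : config) (i : nat) : R :=
  sumV N (fun j => T i j * indI j x).

Definition rate (N : nat) (T : nat -> nat -> R) (gamma : nat -> R)
  (x y : config) : R :=
  sumV N (fun i =>
    (if config_eq_dec y (upd x i Inf) then indS i x * inf_rate N T x i else 0)
    + (if config_eq_dec y (upd x i Rem) then indI i x * gamma i else 0)).

Definition out_rate (N : nat) (T : nat -> nat -> R) (gamma : nat -> R)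
  (x : config) : R :=
  sumV N (fun i => indS i x * inf_rate N T x i + indI i x * gamma i).

Definition master_eq (N : nat) (T : nat -> nat -> R) (gamma : nat -> R)
  (p : R -> config -> R) : Prop :=
  forall (t : R) (y : config), In y (all_configs N) ->
    derivable_pt_lim (fun s => p s y) t
      (sumC N (fun x => p t x * rate N T gamma x y) - p t y * out_rate N T gamma y).

Definition indep_init (N : nat) (pi : nat -> st -> R) (p : R -> config -> R) : Prop :=
  (forall i s, (i < N)%nat -> 0 <= pi i s) /\
  (forall i, (i < N)%nat -> pi i Sus + pi i Inf + pi i Rem = 1) /\
  (forall x, In x (all_configs N) ->
     p 0 x = fold_right Rmult 1 (map (fun i => pi i (node x i)) (seq 0 N))).

Definition expect (N : nat) (p : R -> config -> R) (t : R) (f : config -> R) : R :=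
  sumC N (fun x => p t x * f x).

Definition sdiv (a b : R) : R := if Req_EM_T b 0 then 0 else a / b.

(* underlying undirected graph: i ~ j iff (j,i) in A or (i,j) in A *)
Definition adj (T : nat -> nat -> R) (i j : nat) : Prop := T i j > 0 \/ T j i > 0.

Fixpoint chain (T : nat -> nat -> R) (l : list nat) : Prop :=
  match l with
  | a :: ((b :: _) as l') => adj T a b /\ chain T l'
  | _ => True
  end.

Definition is_forest (N : nat) (T : nat -> nat -> R) : Prop :=
  forall (v : nat) (l : list nat),
    NoDup (v :: l) -> (forall x, In x (v :: l) -> (x < N)%nat) ->
    (2 <= length l)%nat -> chain T (v :: l) -> ~ adj T (last l v) v.

(* Main.v *)
Require Import Defs.
From Stdlib Require Import Reals List Arith Lia Lra Psatz Setoid Morphisms ClassicalEpsilon.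
Import ListNotations.
Open Scope R_scope.

Definition sumL {A} (l : list A) (f : A -> R) : R := fold_right Rplus 0 (map f l).

Lemma sumL_nil {A} (f : A -> R) : sumL [] f = 0.
Proof. reflexivity. Qed.
Lemma sumL_cons {A} a l (f : A -> R) : sumL (a :: l) f = f a + sumL l f.
Proof. reflexivity. Qed.

Lemma sumL_ext {A} (l : list A) f g :
  (forall a, In a l -> f a = g a) -> sumL l f = sumL l g.
Proof.
  induction l; intros H; simpl; auto. unfold sumL in *; simpl.
  rewrite H by (left; auto). rewrite IHl; auto. intros; apply H; right; auto.
Qed.

Lemma sumL_plus {A} (l : list A) f g :
  sumL l (fun a => f a + g a) = sumL l f + sumL l g.
Proof. induction l; unfold sumL in *; simpl; [lra|]. rewrite IHl; lra. Qed.

Lemma sumL_minus {A} (l : list A) f g :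
  sumL l (fun a => f a - g a) = sumL l f - sumL l g.
Proof. induction l; unfold sumL in *; simpl; [lra|]. rewrite IHl; lra. Qed.

Lemma sumL_scal {A} (l : list A) c f :
  sumL l (fun a => c * f a) = c * sumL l f.
Proof. induction l; unfold sumL in *; simpl; [lra|]. rewrite IHl; lra. Qed.

Lemma sumL_scalr {A} (l : list A) c f :
  sumL l (fun a => f a * c) = sumL l f * c.
Proof. induction l; unfold sumL in *; simpl; [lra|]. rewrite IHl; lra. Qed.

Lemma sumL_opp {A} (l : list A) f :
  sumL l (fun a => - f a) = - sumL l f.
Proof. induction l; unfold sumL in *; simpl; [lra|]. rewrite IHl; lra. Qed.

Lemma sumL_zero {A} (l : list A) f :
  (forall a, In a l -> f a = 0) -> sumL l f = 0.
Proof.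
  intros H; rewrite (sumL_ext l f (fun _ => 0)) by auto.
  induction l; unfold sumL in *; simpl; [lra|]. rewrite IHl; [lra|]. intros; apply H; right; auto.
Qed.

Lemma sumL_swap {A B} (l1 : list A) (l2 : list B) f :
  sumL l1 (fun a => sumL l2 (fun b => f a b)) = sumL l2 (fun b => sumL l1 (fun a => f a b)).
Proof.
  induction l1; simpl.
  - unfold sumL at 1; simpl. symmetry; apply sumL_zero; auto.
  - rewrite sumL_cons, IHl1, <- sumL_plus. apply sumL_ext; intros; rewrite sumL_cons; auto.
Qed.

Lemma sumL_le {A} (l : list A) f g :
  (forall a, In a l -> f a <= g a) -> sumL l f <= sumL l g.
Proof.
  induction l; intros H; unfold sumL in *; simpl; [lra|].
  assert (f a <= g a) by (apply H; left; auto).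
  assert (fold_right Rplus 0 (map f l) <= fold_right Rplus 0 (map g l)) by (apply IHl; intros; apply H; right; auto).
  lra.
Qed.

Lemma sumL_nonneg {A} (l : list A) f :
  (forall a, In a l -> 0 <= f a) -> 0 <= sumL l f.
Proof.
  intros H. replace 0 with (sumL l (fun _ => 0)) at 1 by (apply sumL_zero; auto).
  apply sumL_le; auto.
Qed.

Lemma sumL_term {A} (l : list A) f a :
  (forall b, In b l -> 0 <= f b) -> In a l -> f a <= sumL l f.
Proof.
  induction l; intros H Ha; [destruct Ha|]. rewrite sumL_cons.
  destruct Ha as [<-|Ha].
  - assert (0 <= sumL l f) by (apply sumL_nonneg; intros; apply H; right; auto). lra.
  - assert (0 <= f a0) by (apply H; left; auto).
    assert (f a <= sumL l f) by (apply IHl; auto; intros; apply H; right; auto). lra.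
Qed.

Lemma sumL_app {A} (l1 l2 : list A) f : sumL (l1 ++ l2) f = sumL l1 f + sumL l2 f.
Proof. induction l1; unfold sumL in *; simpl; [lra|]. rewrite IHl1; lra. Qed.

Lemma sumL_flat_map {A B} (l : list A) (g : A -> list B) f :
  sumL (flat_map g l) f = sumL l (fun a => sumL (g a) f).
Proof. induction l; simpl; [reflexivity|]. rewrite sumL_app, IHl. reflexivity. Qed.

Lemma derive_sumL {A} (l : list A) (F : R -> A -> R) (d : A -> R) t :
  (forall a, In a l -> derivable_pt_lim (fun s => F s a) t (d a)) ->
  derivable_pt_lim (fun s => sumL l (F s)) t (sumL l d).
Proof.
  induction l; intros H.
  - unfold sumL; simpl. apply derivable_pt_lim_const.
  - unfold sumL in *; simpl.
    apply (derivable_pt_lim_plus (fun s => F s a) (fun s => fold_right Rplus 0 (map (F s) l))).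
    + apply H; left; auto.
    + apply IHl; intros; apply H; right; auto.
Qed.

Lemma sumL_delta_nat (N j : nat) g :
  (j < N)%nat -> sumL (seq 0 N) (fun k => if Nat.eq_dec k j then g k else 0) = g j.
Proof.
  intros Hj. assert (Hs : forall a n, (j < a)%nat ->
    sumL (seq a n) (fun k => if Nat.eq_dec k j then g k else 0) = 0).
  { intros a n; revert a; induction n; intros a Ha; simpl; auto.
    rewrite sumL_cons, IHn by lia. destruct (Nat.eq_dec a j); [lia|lra]. }
  assert (Hg : forall a n, (a <= j < a + n)%nat ->
    sumL (seq a n) (fun k => if Nat.eq_dec k j then g k else 0) = g j).
  { intros a n; revert a; induction n; intros a Ha; [lia|]. simpl. rewrite sumL_cons.
    destruct (Nat.eq_dec a j).
    - subst. rewrite Hs by lia. lra.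
    - rewrite IHn by lia. lra. }
  apply Hg; lia.
Qed.

Lemma sumV_split (N j : nat) g :
  (j < N)%nat -> sumV N g = sumV N (fun k => if Nat.eq_dec k j then 0 else g k) + g j.
Proof.
  intros Hj. change (sumV N g) with (sumL (seq 0 N) g).
  change (sumV N (fun k => if Nat.eq_dec k j then 0 else g k)) with
    (sumL (seq 0 N) (fun k => if Nat.eq_dec k j then 0 else g k)).
  rewrite <- (sumL_delta_nat N j g Hj). rewrite <- sumL_plus.
  apply sumL_ext; intros; destruct (Nat.eq_dec a j); lra.
Qed.

#[export] Instance sumL_proper {A} (l : list A) :
  Proper (pointwise_relation A eq ==> eq) (sumL l).
Proof. intros f g H. apply sumL_ext; intros; apply H. Qed.

Lemma sumV_sumL N f : sumV N f = sumL (seq 0 N) f.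
Proof. reflexivity. Qed.
Lemma sumC_sumL N f : sumC N f = sumL (all_configs N) f.
Proof. reflexivity. Qed.

Lemma all_configs_len N x : In x (all_configs N) <-> length x = N.
Proof.
  revert x; induction N; intros x; simpl.
  - split; [intros [<-|[]]; auto|]. destruct x; simpl; intros H; [auto|discriminate].
  - rewrite in_flat_map. split.
    + intros [c [Hc Hx]]. apply IHN in Hc. simpl in Hx.
      destruct Hx as [<-|[<-|[<-|[]]]]; simpl; auto.
    + destruct x as [|a c]; simpl; intros H; [discriminate|]. injection H; intros Hc.
      exists c; split; [apply IHN; auto|]. simpl. destruct a; auto.
Qed.

Lemma all_configs_nodup N : NoDup (all_configs N).
Proof.
  induction N; simpl.
  - constructor; [simpl; auto|constructor].
  - induction IHN; simpl.
    + constructor.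
    + assert (Hn : forall c, In c (flat_map (fun c => [Sus :: c; Inf :: c; Rem :: c]) l) -> In (tl c) l).
      { intros c Hc. apply in_flat_map in Hc. destruct Hc as [d [Hd Hc]].
        simpl in Hc. destruct Hc as [<-|[<-|[<-|[]]]]; auto. }
      repeat constructor; simpl.
      * intros [H1|[H1|H1]]; try discriminate. apply Hn in H1; simpl in H1; auto.
      * intros [H1|H1]; try discriminate. apply Hn in H1; simpl in H1; auto.
      * intros H1. apply Hn in H1; simpl in H1; auto.
      * auto.
Qed.

Lemma sumC_S n f :
  sumC (S n) f = sumC n (fun c => f (Sus :: c) + f (Inf :: c) + f (Rem :: c)).
Proof.
  change (sumL (all_configs (S n)) f = sumL (all_configs n) (fun c => f (Sus :: c) + f (Inf :: c) + f (Rem :: c))).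
  simpl. rewrite sumL_flat_map. apply sumL_ext; intros; unfold sumL; simpl; lra.
Qed.

Lemma sumL_delta {A} (dec : forall x y : A, {x = y} + {x <> y}) (l : list A) z g :
  NoDup l -> In z l -> sumL l (fun y => if dec y z then g y else 0) = g z.
Proof.
  induction 1; intros Hz; [destruct Hz|]. rewrite sumL_cons.
  destruct Hz as [<-|Hz].
  - destruct (dec x x); [|congruence]. rewrite sumL_zero; [lra|].
    intros a Ha. destruct (dec a x); auto. subst; contradiction.
  - destruct (dec x z); [subst; contradiction|]. rewrite IHNoDup; auto; lra.
Qed.

Lemma sumC_delta N z g :
  In z (all_configs N) -> sumC N (fun y => if config_eq_dec y z then g y else 0) = g z.
Proof. intros; apply sumL_delta; auto; apply all_configs_nodup. Qed.

Lemma upd_length x i s : length (upd x i s) = length x.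
Proof. revert i; induction x; intros [|i]; simpl; auto. Qed.

Lemma node_upd x i s m : (i < length x)%nat ->
  node (upd x i s) m = if Nat.eq_dec m i then s else node x m.
Proof.
  unfold node. revert i m; induction x; intros i m Hi; simpl in *; [lia|].
  destruct i as [|i], m as [|m]; simpl; auto.
  rewrite IHx by lia. destruct (Nat.eq_dec m i), (Nat.eq_dec (S m) (S i)); auto; lia.
Qed.

Lemma config_ext x y : length x = length y ->
  (forall m, (m < length x)%nat -> node x m = node y m) -> x = y.
Proof. intros H1 H2. apply (nth_ext x y Rem Rem); auto. Qed.

Lemma node_out x m : (length x <= m)%nat -> node x m = Rem.
Proof. intros; unfold node; apply nth_overflow; auto. Qed.

Definition mix (A : nat -> bool) (x x' : config) : config :=
  map (fun m => if A m then node x m else node x' m) (seq 0 (length x)).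

Lemma mix_length A x x' : length (mix A x x') = length x.
Proof. unfold mix; rewrite length_map, length_seq; auto. Qed.

Lemma nth_map_seq0 {B} (f : nat -> B) n m d : (m < n)%nat -> nth m (map f (seq 0 n)) d = f m.
Proof.
  intros H. rewrite nth_indep with (d' := f 0%nat) by (rewrite length_map, length_seq; auto).
  rewrite map_nth, seq_nth by auto. auto.
Qed.

Lemma node_mix A x x' m : length x = length x' ->
  node (mix A x x') m = if A m then node x m else node x' m.
Proof.
  intros Hl. destruct (Nat.lt_ge_cases m (length x)).
  - unfold mix, node. rewrite nth_map_seq0 by auto. auto.
  - rewrite !node_out; try rewrite mix_length; try lia. destruct (A m); auto.
Qed.

Lemma upd_in N x i s : In x (all_configs N) -> In (upd x i s) (all_configs N).
Proof. rewrite !all_configs_len, upd_length; auto. Qed.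

Lemma mix_in N A x x' : In x (all_configs N) -> In x' (all_configs N) -> In (mix A x x') (all_configs N).
Proof. rewrite !all_configs_len, mix_length; auto. Qed.

Lemma dec_cons a y b c (u v : R) :
  (if config_eq_dec (a :: y) (b :: c) then u else v) =
  (if st_eq_dec a b then (if config_eq_dec y c then u else v) else v).
Proof.
  destruct (config_eq_dec (a :: y) (b :: c)) as [E|E];
  destruct (st_eq_dec a b); destruct (config_eq_dec y c); subst; auto;
  try (injection E; intros; subst; congruence); congruence.
Qed.

Lemma sumC_delta' N z g :
  In z (all_configs N) -> sumC N (fun y => if config_eq_dec z y then g y else 0) = g z.
Proof.
  intros Hz. rewrite <- (sumC_delta N z g Hz). apply sumL_ext; intros y _.
  destruct (config_eq_dec z y), (config_eq_dec y z); subst; congruence.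
Qed.


Lemma sumC_swap {A} (l : list A) N f :
  sumL l (fun a => sumC N (fun b => f a b)) = sumC N (fun b => sumL l (fun a => f a b)).
Proof. apply sumL_swap. Qed.

Lemma sumC_ext N f g : (forall x, In x (all_configs N) -> f x = g x) -> sumC N f = sumC N g.
Proof. apply sumL_ext. Qed.

Lemma pre_sum n : forall y m s h, length y = n -> (m < n)%nat ->
  sumC n (fun x => if config_eq_dec y (upd x m s) then h x else 0) =
  (if st_eq_dec (node y m) s then h (upd y m Sus) + h (upd y m Inf) + h (upd y m Rem) else 0).
Proof.
  induction n; intros y m s h Hy Hm; [lia|].
  destruct y as [|a y']; [discriminate|]. simpl in Hy. injection Hy; intros Hy'.
  rewrite sumC_S. destruct m as [|m'].
  - simpl upd. rewrite (sumC_ext n _ (fun c => if st_eq_dec a s then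
        (if config_eq_dec y' c then h (Sus :: c) + h (Inf :: c) + h (Rem :: c) else 0) else 0)).
    2:{ intros c _. rewrite !dec_cons. destruct (st_eq_dec a s), (config_eq_dec y' c); lra. }
    unfold node; simpl. destruct (st_eq_dec a s).
    + apply (sumC_delta' n y' (fun c => h (Sus :: c) + h (Inf :: c) + h (Rem :: c))).
      apply all_configs_len; auto.
    + apply sumL_zero; auto.
  - simpl upd. rewrite (sumC_ext n _ (fun c => if config_eq_dec y' (upd c m' s) then h (a :: c) else 0)).
    2:{ intros c _. rewrite !dec_cons.
        destruct a; simpl; destruct (config_eq_dec y' (upd c m' s)); lra. }
    rewrite IHn by lia. unfold node; simpl. reflexivity.
Qed.

Section Model.
Variable N : nat.
Variable T : nat -> nat -> R.
Variable gamma : nat -> R.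

Definition coef1 (y : config) (m : nat) : R :=
  match node y m with Sus => 0 | Inf => inf_rate N T (upd y m Sus) m | Rem => gamma m end.
Definition pc (y : config) (m : nat) : config :=
  match node y m with Sus => y | Inf => upd y m Sus | Rem => upd y m Inf end.

Lemma indS_upd y i s : (i < length y)%nat -> indS i (upd y i s) = match s with Sus => 1 | _ => 0 end.
Proof. intros; unfold indS; rewrite node_upd by auto; destruct (Nat.eq_dec i i); [|lia]; auto. Qed.
Lemma indI_upd y i s : (i < length y)%nat -> indI i (upd y i s) = match s with Inf => 1 | _ => 0 end.
Proof. intros; unfold indI; rewrite node_upd by auto; destruct (Nat.eq_dec i i); [|lia]; auto. Qed.

Lemma inflow_back (q : config -> R) y : In y (all_configs N) ->
  sumC N (fun x => q x * rate N T gamma x y) = sumV N (fun m => coef1 y m * q (pc y m)).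
Proof.
  intros Hy. apply all_configs_len in Hy. unfold rate.
  rewrite (sumC_ext N _ (fun x => sumV N (fun i =>
     (if config_eq_dec y (upd x i Inf) then q x * (indS i x * inf_rate N T x i) else 0)
   + (if config_eq_dec y (upd x i Rem) then q x * (indI i x * gamma i) else 0)))).
  2:{ intros x _. rewrite sumV_sumL, <- sumL_scal. apply sumL_ext; intros i _.
      destruct (config_eq_dec y (upd x i Inf)), (config_eq_dec y (upd x i Rem)); lra. }
  rewrite sumC_sumL. setoid_rewrite sumV_sumL. rewrite sumL_swap. apply sumL_ext; intros m Hm.
  apply in_seq in Hm.
  rewrite sumL_plus.
  change (sumC N (fun x => if config_eq_dec y (upd x m Inf) then q x * (indS m x * inf_rate N T x m) else 0)
    + sumC N (fun x => if config_eq_dec y (upd x m Rem) then q x * (indI m x * gamma m) else 0)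
    = coef1 y m * q (pc y m)).
  rewrite !pre_sum by lia. unfold coef1, pc.
  assert (Hl : forall s, (m < length (upd y m s))%nat) by (intros; rewrite upd_length; lia).
  rewrite !indS_upd, !indI_upd by lia.
  destruct (node y m); simpl; lra.
Qed.

Lemma master_back (p : R -> config -> R) : master_eq N T gamma p ->
  forall t y, In y (all_configs N) ->
  derivable_pt_lim (fun s => p s y) t
    (sumV N (fun m => coef1 y m * p t (pc y m)) - p t y * out_rate N T gamma y).
Proof.
  intros H t y Hy. rewrite <- inflow_back by auto. apply H; auto.
Qed.

Definition gen (f : config -> R) (x : config) : R :=
  sumV N (fun i => indS i x * inf_rate N T x i * (f (upd x i Inf) - f x)
                 + indI i x * gamma i * (f (upd x i Rem) - f x)).

Lemma derive_mult_const g c t l : derivable_pt_lim g t l ->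
  derivable_pt_lim (fun s => g s * c) t (l * c).
Proof.
  intros H. replace (l * c) with (l * (fun _ => c) t + g t * 0) by ring.
  apply (derivable_pt_lim_mult g (fun _ => c)); auto. apply derivable_pt_lim_const.
Qed.

Lemma outflow (f : config -> R) x : In x (all_configs N) ->
  sumC N (fun y => rate N T gamma x y * f y) =
  sumV N (fun i => indS i x * inf_rate N T x i * f (upd x i Inf) + indI i x * gamma i * f (upd x i Rem)).
Proof.
  intros Hx. unfold rate.
  rewrite (sumC_ext N _ (fun y => sumV N (fun i =>
     (if config_eq_dec y (upd x i Inf) then indS i x * inf_rate N T x i * f y else 0)
   + (if config_eq_dec y (upd x i Rem) then indI i x * gamma i * f y else 0)))).
  2:{ intros y _. rewrite sumV_sumL, <- sumL_scalr. apply sumL_ext; intros i _.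
      destruct (config_eq_dec y (upd x i Inf)), (config_eq_dec y (upd x i Rem)); lra. }
  rewrite sumC_sumL. setoid_rewrite sumV_sumL. rewrite sumL_swap. apply sumL_ext; intros m Hm.
  rewrite sumL_plus, <- !sumC_sumL.
  rewrite (sumC_delta N (upd x m Inf) (fun y => indS m x * inf_rate N T x m * f y)) by (apply upd_in; auto).
  rewrite (sumC_delta N (upd x m Rem) (fun y => indI m x * gamma m * f y)) by (apply upd_in; auto).
  auto.
Qed.

Lemma expect_deriv (p : R -> config -> R) (f : config -> R) t : master_eq N T gamma p ->
  derivable_pt_lim (fun s => expect N p s f) t (sumC N (fun x => p t x * gen f x)).
Proof.
  intros H. unfold expect.
  replace (sumC N (fun x => p t x * gen f x)) with
    (sumL (all_configs N) (fun y => (sumC N (fun x => p t x * rate N T gamma x y) - p t y * out_rate N T gamma y) * f y)).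
  - apply (derive_sumL (all_configs N) (fun s x => p s x * f x)). intros y Hy.
    apply derive_mult_const. apply H; auto.
  - rewrite <- sumC_sumL.
    rewrite (sumC_ext N _ (fun y => sumC N (fun x => p t x * (rate N T gamma x y * f y)) - p t y * out_rate N T gamma y * f y)).
    2:{ intros y _. rewrite Rmult_minus_distr_r, sumC_sumL, <- sumL_scalr. f_equal.
        apply sumL_ext; intros; ring. }
    rewrite sumC_sumL, sumL_minus, sumC_swap.
    rewrite !sumC_sumL, <- sumL_minus. apply sumL_ext; intros x Hx.
    rewrite sumL_scal, <- sumC_sumL, outflow by auto. unfold gen, out_rate.
    rewrite !sumV_sumL, Rmult_assoc, <- sumL_scalr, <- Rmult_minus_distr_l, <- sumL_minus.
    f_equal. apply sumL_ext; intros; ring.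
Qed.
End Model.

Lemma gronwall (V dV : R -> R) K :
  (forall t, derivable_pt_lim V t (dV t)) ->
  (forall t, 0 <= t -> dV t <= K * V t) ->
  (forall t, 0 <= t -> 0 <= V t) -> V 0 = 0 ->
  forall t, 0 <= t -> V t = 0.
Proof.
  intros HD Hle Hnn H0 t Ht.
  set (g := fun s => V s * exp (- K * s)).
  set (dg := fun s => dV s * exp (- K * s) + V s * (exp (- K * s) * (- K))).
  assert (Hg : forall s, derivable_pt_lim g s (dg s)).
  { intros s. unfold g, dg.
    apply (derivable_pt_lim_mult V (fun s => exp (- K * s))); auto.
    apply (derivable_pt_lim_comp (fun s => - K * s) exp).
    - pose proof (derivable_pt_lim_scal (fun s => s) (-K) s 1 (derivable_pt_lim_id s)) as HH.
      rewrite Rmult_1_r in HH. exact HH.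
    - apply derivable_pt_lim_exp. }
  assert (pr : derivable g) by (intros s; exists (dg s); apply Hg).
  destruct (Req_dec t 0) as [E|E]; [subst; auto|].
  destruct (MVT_cor1 g 0 t pr) as [c [Hc Hc']]; [lra|].
  rewrite (derive_pt_eq_0 g c (dg c) (pr c) (Hg c)) in Hc.
  assert (dg c <= 0).
  { unfold dg. assert (Hk := Hle c ltac:(lra)). assert (0 < exp (- K * c)) by apply exp_pos. nra. }
  assert (g 0 = 0) by (unfold g; rewrite H0; ring).
  assert (g t <= 0) by nra.
  unfold g in *. assert (0 < exp (- K * t)) by apply exp_pos.
  assert (0 <= V t) by (apply Hnn; lra). nra.
Qed.

Definition negsq (z : R) : R := Rmin z 0 * Rmin z 0.

Lemma negsq_bound z d : Rabs (negsq (z + d) - negsq z - 2 * Rmin z 0 * d) <= 2 * (d * d).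
Proof.
  unfold negsq, Rmin.
  destruct (Rle_dec (z + d) 0), (Rle_dec z 0); apply Rabs_le; split; nra.
Qed.

Lemma negsq_deriv z : derivable_pt_lim negsq z (2 * Rmin z 0).
Proof.
  intros eps Heps. exists (mkposreal (eps / 4) ltac:(lra)). intros h Hh0 Hh. simpl in Hh.
  assert (Hb := negsq_bound z h).
  replace ((negsq (z + h) - negsq z) / h - 2 * Rmin z 0) with
    ((negsq (z + h) - negsq z - 2 * Rmin z 0 * h) / h) by (field; auto).
  unfold Rdiv at 1; rewrite Rabs_mult, Rabs_inv.
  assert (Ha : 0 < Rabs h) by (apply Rabs_pos_lt; auto).
  assert (Hhh : h * h = Rabs h * Rabs h) by (rewrite <- Rabs_mult; rewrite Rabs_right; nra).
  rewrite Hhh in Hb.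
  apply Rle_lt_trans with (2 * Rabs h); [|lra].
  unfold Rdiv. replace (2 * Rabs h) with (2 * (Rabs h * Rabs h) * / Rabs h) by (field; lra).
  apply Rmult_le_compat_r; [left; apply Rinv_0_lt_compat; auto|auto].
Qed.

Section Pos.
Variable N : nat.
Variable T : nat -> nat -> R.
Variable gamma : nat -> R.
Hypothesis HT : forall i j, (i < N)%nat -> (j < N)%nat -> 0 <= T i j.
Hypothesis Hgamma : forall i, (i < N)%nat -> 0 < gamma i.

Lemma indS_nn i x : 0 <= indS i x.
Proof. unfold indS; destruct (node x i); lra. Qed.
Lemma indI_nn i x : 0 <= indI i x.
Proof. unfold indI; destruct (node x i); lra. Qed.

Lemma inf_rate_nn x m : (m < N)%nat -> 0 <= inf_rate N T x m.
Proof.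
  intros Hm. unfold inf_rate. rewrite sumV_sumL. apply sumL_nonneg; intros k Hk.
  apply in_seq in Hk. apply Rmult_le_pos; [apply HT; lia|apply indI_nn].
Qed.

Lemma coef1_nn y m : (m < N)%nat -> 0 <= coef1 N T gamma y m.
Proof.
  intros Hm. unfold coef1. destruct (node y m); [lra|apply inf_rate_nn; auto|].
  left; apply Hgamma; auto.
Qed.

Lemma out_rate_nn y : 0 <= out_rate N T gamma y.
Proof.
  unfold out_rate. rewrite sumV_sumL. apply sumL_nonneg; intros k Hk. apply in_seq in Hk.
  assert (0 <= indS k y * inf_rate N T y k) by (apply Rmult_le_pos; [apply indS_nn|apply inf_rate_nn; lia]).
  assert (0 <= indI k y * gamma k) by (apply Rmult_le_pos; [apply indI_nn|left; apply Hgamma; lia]).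
  lra.
Qed.

Lemma pc_in y m : In y (all_configs N) -> In (pc y m) (all_configs N).
Proof. intros H; unfold pc; destruct (node y m); auto; apply upd_in; auto. Qed.

Lemma negsq_nn z : 0 <= negsq z.
Proof. unfold negsq; nra. Qed.

Lemma neg_bound1 a b c : 0 <= c -> 2 * Rmin a 0 * (c * b) <= c * (negsq a + negsq b).
Proof.
  intros Hc. unfold negsq, Rmin. destruct (Rle_dec a 0), (Rle_dec b 0).
  - assert (0 <= c * ((a - b) * (a - b))) by (apply Rmult_le_pos; [lra|apply Rle_0_sqr]).
    assert (c*(a*a+b*b) - 2*a*(c*b) = c*((a-b)*(a-b))) by ring. lra.
  - assert (0 <= c * (- a * b)) by (apply Rmult_le_pos; nra).
    assert (0 <= c * (a * a)) by (apply Rmult_le_pos; nra).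
    assert (c*(a*a+0*0) - 2*a*(c*b) = 2 * (c * (- a * b)) + c * (a * a)) by ring. lra.
  - assert (0 <= c * (b * b)) by (apply Rmult_le_pos; nra).
    assert (c*(0*0+b*b) - 2*0*(c*b) = c*(b*b)) by ring. lra.
  - assert (c*(0*0+0*0) - 2*0*(c*b) = 0) by ring. lra.
Qed.

Lemma neg_bound2 a o : 0 <= o -> 2 * Rmin a 0 * (- (a * o)) <= 0.
Proof. intros Ho. unfold Rmin. destruct (Rle_dec a 0); nra. Qed.

Lemma p_nonneg (p : R -> config -> R) : master_eq N T gamma p ->
  (forall x, In x (all_configs N) -> 0 <= p 0 x) ->
  forall t, 0 <= t -> forall y, In y (all_configs N) -> 0 <= p t y.
Proof.
  intros HM H0.
  set (V := fun t => sumC N (fun y => negsq (p t y))).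
  set (dV := fun t => sumC N (fun y => 2 * Rmin (p t y) 0 *
     (sumV N (fun m => coef1 N T gamma y m * p t (pc y m)) - p t y * out_rate N T gamma y))).
  set (K := 2 * sumC N (fun y => sumV N (fun m => coef1 N T gamma y m))).
  assert (HV : forall t, 0 <= t -> V t = 0).
  { apply (gronwall V dV K).
    - intros t. unfold V, dV. rewrite sumC_sumL.
      apply (derive_sumL (all_configs N) (fun s y => negsq (p s y))). intros y Hy.
      apply (derivable_pt_lim_comp (fun s => p s y) negsq).
      + apply master_back; auto.
      + apply negsq_deriv.
    - intros t _. unfold dV, K.
      assert (HVb : forall z, In z (all_configs N) -> negsq (p t z) <= V t).
      { intros z Hz. unfold V. rewrite sumC_sumL.
        apply (sumL_term (all_configs N) (fun y => negsq (p t y)) z); auto.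
        intros; apply negsq_nn. }
      apply Rle_trans with (sumC N (fun y => sumV N (fun m => coef1 N T gamma y m * (2 * V t)))).
      + rewrite !sumC_sumL. apply sumL_le; intros y Hy.
        rewrite Rmult_minus_distr_l, sumV_sumL, <- sumL_scal.
        assert (Hb2 := neg_bound2 (p t y) (out_rate N T gamma y) (out_rate_nn y)).
        apply Rle_trans with (sumL (seq 0 N) (fun m => coef1 N T gamma y m * (negsq (p t y) + negsq (p t (pc y m)))) + 0).
        * unfold Rminus. apply Rplus_le_compat.
          -- apply sumL_le; intros m Hm. apply in_seq in Hm. apply neg_bound1, coef1_nn; lia.
          -- replace (- (2 * Rmin (p t y) 0 * (p t y * out_rate N T gamma y))) with
               (2 * Rmin (p t y) 0 * - (p t y * out_rate N T gamma y)) by ring. auto.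
        * rewrite Rplus_0_r. apply sumL_le; intros m Hm. apply in_seq in Hm.
          apply Rmult_le_compat_l; [apply coef1_nn; lia|].
          assert (negsq (p t y) <= V t) by auto.
          assert (negsq (p t (pc y m)) <= V t) by (apply HVb, pc_in; auto). lra.
      + rewrite !sumC_sumL. apply Req_le.
        rewrite (sumL_ext _ _ (fun y => sumV N (fun m => coef1 N T gamma y m) * (2 * V t)))
          by (intros; rewrite !sumV_sumL, sumL_scalr; reflexivity).
        rewrite sumL_scalr. ring.
    - intros t _. unfold V. apply sumL_nonneg; intros; apply negsq_nn.
    - unfold V. apply sumL_zero; intros y Hy. unfold negsq, Rmin.
      destruct (Rle_dec (p 0 y) 0); [|ring]. assert (0 <= p 0 y) by auto. nra. }
  intros t Ht y Hy. assert (Hn : negsq (p t y) <= V t).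
  { unfold V. rewrite sumC_sumL. apply (sumL_term (all_configs N) (fun y => negsq (p t y)) y); auto.
    intros; apply negsq_nn. }
  rewrite HV in Hn by auto. unfold negsq, Rmin in Hn. destruct (Rle_dec (p t y) 0); nra.
Qed.
End Pos.

Section Split.
Variable N : nat.
Variable T : nat -> nat -> R.
Variable gamma : nat -> R.
Variable A : nat -> bool.
Variable c : nat.
Hypothesis Hc : (c < N)%nat.
Hypothesis HAc : A c = false.
Hypothesis Hsep : forall m k, (m < N)%nat -> (k < N)%nat -> A m = true -> A k = false -> k <> c ->
  T m k = 0 /\ T k m = 0.

Definition good (x : config) := length x = N /\ node x c = Sus.

Lemma inf_rate_ext z z' m :
  (forall k, (k < N)%nat -> T m k = 0 \/ indI k z = indI k z') -> inf_rate N T z m = inf_rate N T z' m.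
Proof.
  intros H. unfold inf_rate. rewrite !sumV_sumL. apply sumL_ext; intros k Hk. apply in_seq in Hk.
  destruct (H k ltac:(lia)) as [E|E]; rewrite E; ring.
Qed.

Ltac nodes := repeat first
  [ rewrite node_mix by (repeat rewrite upd_length; repeat rewrite mix_length; lia)
  | rewrite node_upd by (repeat rewrite upd_length; repeat rewrite mix_length; lia) ].

Ltac cext := apply config_ext;
  [ repeat rewrite upd_length; repeat rewrite mix_length; repeat rewrite upd_length; congruence
  | repeat rewrite upd_length; repeat rewrite mix_length; repeat rewrite upd_length ].

Lemma mix_good x x' : good x -> good x' -> good (mix A x x').
Proof.
  intros [Hx Hxc] [Hx' Hx'c]. split; [rewrite mix_length; auto|]. nodes. rewrite HAc; auto.
Qed.

Lemma pc_good x m : good x -> (m < N)%nat -> good (pc x m).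
Proof.
  intros [Hx Hxc] Hm. unfold pc. destruct (node x m) eqn:E; [split; auto| |];
  (split; [rewrite upd_length; auto|]); nodes; destruct (Nat.eq_dec c m); subst; auto; congruence.
Qed.

Lemma coef1_mixA x x' m : good x -> good x' -> (m < N)%nat -> A m = true ->
  coef1 N T gamma (mix A x x') m = coef1 N T gamma x m /\ pc (mix A x x') m = mix A (pc x m) x'
  /\ mix A x' x = mix A x' (pc x m).
Proof.
  intros [Hx Hxc] [Hx' Hx'c] Hm HAm.
  assert (Hnm : node (mix A x x') m = node x m) by (nodes; rewrite HAm; auto).
  assert (Hm2 : mix A x' x = mix A x' (pc x m)).
  { unfold pc; destruct (node x m); auto; cext; intros k Hk; nodes; destruct (Nat.eq_dec k m); subst; try rewrite HAm; auto; destruct (A k); auto. }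
  assert (Hpc : pc (mix A x x') m = mix A (pc x m) x').
  { unfold pc; rewrite Hnm; destruct (node x m); auto; cext; intros k Hk; nodes; destruct (Nat.eq_dec k m); subst; try rewrite HAm; auto; destruct (A k); auto. }
  split; [|split; auto].
  unfold coef1. rewrite Hnm. destruct (node x m) eqn:E; auto.
  apply inf_rate_ext. intros k Hk.
  destruct (A k) eqn:Ak.
  + right. unfold indI. nodes. rewrite Ak. destruct (Nat.eq_dec k m); auto.
  + destruct (Nat.eq_dec k c).
    * subst. right. unfold indI. nodes. rewrite HAc.
      destruct (Nat.eq_dec c m); [congruence|]. rewrite Hxc, Hx'c; auto.
    * left. apply (Hsep m k); auto.
Qed.
Lemma coef1_mixB x x' m : good x -> good x' -> (m < N)%nat -> A m = false -> m <> c ->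
  coef1 N T gamma (mix A x' x) m = coef1 N T gamma x m /\ pc (mix A x' x) m = mix A x' (pc x m)
  /\ mix A x x' = mix A (pc x m) x'.
Proof.
  intros [Hx Hxc] [Hx' Hx'c] Hm HAm Hmc.
  assert (Hnm : node (mix A x' x) m = node x m) by (nodes; rewrite HAm; auto).
  assert (Hm2 : mix A x x' = mix A (pc x m) x').
  { unfold pc; destruct (node x m); auto; cext; intros k Hk; nodes; destruct (Nat.eq_dec k m); subst; try rewrite HAm; auto; destruct (A k); auto. }
  assert (Hpc : pc (mix A x' x) m = mix A x' (pc x m)).
  { unfold pc; rewrite Hnm; destruct (node x m); auto; cext; intros k Hk; nodes; destruct (Nat.eq_dec k m); subst; try rewrite HAm; auto; destruct (A k); auto. }
  split; [|split; auto].
  unfold coef1. rewrite Hnm. destruct (node x m) eqn:E; auto.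
  apply inf_rate_ext. intros k Hk.
  destruct (A k) eqn:Ak.
  + left. apply (Hsep k m); auto.
  + right. unfold indI. nodes. rewrite Ak. destruct (Nat.eq_dec k m); auto.
Qed.

Lemma coef1_good x : good x -> coef1 N T gamma x c = 0.
Proof. intros [_ H]; unfold coef1; rewrite H; auto. Qed.

Definition Wq (q : config -> R) x x' := q x * q x' - q (mix A x x') * q (mix A x' x).
Definition aq (q : config -> R) y m := coef1 N T gamma y m * q (pc y m).

Lemma W_step q x x' m : good x -> good x' -> (m < N)%nat ->
  aq q x m * q x' + q x * aq q x' m - aq q (mix A x x') m * q (mix A x' x)
  - q (mix A x x') * aq q (mix A x' x) m
  = coef1 N T gamma x m * Wq q (pc x m) x' + coef1 N T gamma x' m * Wq q x (pc x' m).
Proof.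
  intros Hg Hg' Hm. unfold aq, Wq.
  destruct (A m) eqn:Am.
  - destruct (coef1_mixA x x' m Hg Hg' Hm Am) as [E1 [E2 E3]].
    destruct (coef1_mixA x' x m Hg' Hg Hm Am) as [F1 [F2 F3]].
    rewrite E1, E2, F1, F2. rewrite E3, F3. ring.
  - destruct (Nat.eq_dec m c).
    + subst. rewrite !coef1_good; auto; try apply mix_good; auto. ring.
    + destruct (coef1_mixB x x' m Hg Hg' Hm Am n) as [E1 [E2 E3]].
      destruct (coef1_mixB x' x m Hg' Hg Hm Am n) as [F1 [F2 F3]].
      rewrite E1, E2, F1, F2. rewrite E3, F3. ring.
Qed.
Lemma indI_mix_sum x x' j : length x = length x' ->
  indI j (mix A x x') + indI j (mix A x' x) = indI j x + indI j x'.
Proof. intros H. unfold indI. rewrite !node_mix by auto. destruct (A j); ring. Qed.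

Lemma inf_mixA x x' k : good x -> good x' -> (k < N)%nat -> A k = true ->
  inf_rate N T (mix A x x') k = inf_rate N T x k.
Proof.
  intros [Hx Hxc] [Hx' Hx'c] Hk Ak. apply inf_rate_ext. intros j Hj.
  destruct (A j) eqn:Aj.
  - right. unfold indI. nodes. rewrite Aj. auto.
  - destruct (Nat.eq_dec j c).
    + subst. right. unfold indI. nodes. rewrite HAc, Hxc, Hx'c. auto.
    + left. apply (Hsep k j); auto.
Qed.

Lemma inf_mixB x x' k : good x -> good x' -> (k < N)%nat -> A k = false -> k <> c ->
  inf_rate N T (mix A x x') k = inf_rate N T x' k.
Proof.
  intros [Hx Hxc] [Hx' Hx'c] Hk Ak Hkc. apply inf_rate_ext. intros j Hj.
  destruct (A j) eqn:Aj.
  - left. apply (Hsep j k); auto.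
  - right. unfold indI. nodes. rewrite Aj. auto.
Qed.

Lemma out_mix x x' : good x -> good x' ->
  out_rate N T gamma (mix A x x') + out_rate N T gamma (mix A x' x) =
  out_rate N T gamma x + out_rate N T gamma x'.
Proof.
  intros Hg Hg'. pose proof Hg as [Hx Hxc]. pose proof Hg' as [Hx' Hx'c].
  unfold out_rate. rewrite !sumV_sumL, <- !sumL_plus. apply sumL_ext; intros k Hk. apply in_seq in Hk.
  assert (HI := indI_mix_sum x x' k ltac:(congruence)).
  assert (HSk : forall y y', length y = length y' -> indS k (mix A y y') = if A k then indS k y else indS k y').
  { intros y y' Hl. unfold indS. rewrite node_mix by auto. destruct (A k); auto. }
  destruct (A k) eqn:Ak.
  - rewrite !HSk by congruence.
    rewrite (inf_mixA x x' k), (inf_mixA x' x k) by (auto; lia). nra.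
  - destruct (Nat.eq_dec k c).
    + subst. unfold indS. rewrite !node_mix by congruence. rewrite HAc, Hxc, Hx'c.
      assert (Hs : inf_rate N T (mix A x x') c + inf_rate N T (mix A x' x) c =
                   inf_rate N T x c + inf_rate N T x' c).
      { unfold inf_rate. rewrite !sumV_sumL, <- !sumL_plus. apply sumL_ext; intros j _.
        assert (HIj := indI_mix_sum x x' j ltac:(congruence)). nra. }
      nra.
    + rewrite !HSk by congruence.
      rewrite (inf_mixB x x' k), (inf_mixB x' x k) by (auto; lia). nra.
Qed.
Hypothesis HT : forall i j, (i < N)%nat -> (j < N)%nat -> 0 <= T i j.
Hypothesis Hgamma : forall i, (i < N)%nat -> 0 < gamma i.

Definition prodL {B} (l : list B) (f : B -> R) := fold_right Rmult 1 (map f l).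

Lemma prodL_mult {B} (l : list B) f g : prodL l f * prodL l g = prodL l (fun i => f i * g i).
Proof. induction l; unfold prodL in *; simpl; [ring|]. rewrite <- IHl. ring. Qed.

Lemma prodL_ext {B} (l : list B) f g : (forall a, In a l -> f a = g a) -> prodL l f = prodL l g.
Proof.
  induction l; intros H; unfold prodL in *; simpl; auto.
  rewrite H by (left; auto). rewrite IHl; auto. intros; apply H; right; auto.
Qed.

Lemma good_in x : good x -> In x (all_configs N).
Proof. intros [H _]; apply all_configs_len; auto. Qed.

Lemma indS_c x : In x (all_configs N) -> (indS c x = 0 \/ (indS c x = 1 /\ good x)).
Proof.
  intros H. apply all_configs_len in H. unfold indS. destruct (node x c) eqn:E; auto.
  right; split; auto; split; auto.
Qed.

Lemma deriv_sq_scal g k t l : derivable_pt_lim g t l ->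
  derivable_pt_lim (fun s => k * (g s * g s)) t (k * (2 * g t * l)).
Proof.
  intros H. replace (k * (2 * g t * l)) with (k * (l * g t + g t * l)) by ring.
  apply (derivable_pt_lim_scal (fun s => g s * g s)).
  apply (derivable_pt_lim_mult g g); auto.
Qed.

Lemma W_zero (p : R -> config -> R) (pi : nat -> st -> R) :
  master_eq N T gamma p -> indep_init N pi p ->
  forall t, 0 <= t -> forall x x', good x -> good x' -> Wq (p t) x x' = 0.
Proof.
  intros HM [_ [_ H0]].
  set (dp := fun t y => sumV N (fun m => aq (p t) y m) - p t y * out_rate N T gamma y).
  assert (Hdp : forall t y, In y (all_configs N) -> derivable_pt_lim (fun s => p s y) t (dp t y)).
  { intros t y Hy. apply master_back; auto. }
  set (dW := fun t x x' => sumV N (fun m => coef1 N T gamma x m * Wq (p t) (pc x m) x'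
                 + coef1 N T gamma x' m * Wq (p t) x (pc x' m))
               - (out_rate N T gamma x + out_rate N T gamma x') * Wq (p t) x x').
  set (dW0 := fun t x x' => dp t x * p t x' + p t x * dp t x'
        - (dp t (mix A x x') * p t (mix A x' x) + p t (mix A x x') * dp t (mix A x' x))).
  assert (HdW0 : forall t x x', In x (all_configs N) -> In x' (all_configs N) ->
            derivable_pt_lim (fun s => Wq (p s) x x') t (dW0 t x x')).
  { intros t x x' Hx Hx'.
    assert (Hm1 : In (mix A x x') (all_configs N)) by (apply mix_in; auto).
    assert (Hm2 : In (mix A x' x) (all_configs N)) by (apply mix_in; auto).
    unfold Wq, dW0. apply (derivable_pt_lim_minus (fun s => p s x * p s x') (fun s => p s (mix A x x') * p s (mix A x' x)));
        apply (derivable_pt_lim_mult (fun s => p s _) (fun s => p s _)); auto. }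
  assert (HdWeq : forall t x x', good x -> good x' -> dW0 t x x' = dW t x x').
  { intros t x x' Hg Hg'.
    - assert (HS : sumV N (fun m => aq (p t) x m) * p t x' + p t x * sumV N (fun m => aq (p t) x' m)
          - sumV N (fun m => aq (p t) (mix A x x') m) * p t (mix A x' x)
          - p t (mix A x x') * sumV N (fun m => aq (p t) (mix A x' x) m)
          = sumV N (fun m => coef1 N T gamma x m * Wq (p t) (pc x m) x'
                 + coef1 N T gamma x' m * Wq (p t) x (pc x' m))).
      { rewrite !sumV_sumL, <- !sumL_scalr, <- !sumL_scal, <- !sumL_plus, <- !sumL_minus.
        apply sumL_ext; intros m Hm. apply in_seq in Hm. rewrite <- W_step; auto; lia. }
      assert (Ho := out_mix x x' Hg Hg').
      unfold dW, dW0, dp. rewrite <- HS.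
      replace (out_rate N T gamma (mix A x x')) with
        (out_rate N T gamma x + out_rate N T gamma x' - out_rate N T gamma (mix A x' x)) by lra.
      unfold Wq. ring. }
  assert (Hcoef : forall x m, (m < N)%nat -> 0 <= coef1 N T gamma x m) by (intros; apply coef1_nn; auto).
  set (V := fun t => sumC N (fun x => sumC N (fun x' => indS c x * indS c x' * (Wq (p t) x x' * Wq (p t) x x')))).
  set (K := 2 * sumC N (fun x => sumC N (fun x' => sumV N (fun m => coef1 N T gamma x m + coef1 N T gamma x' m)))).
  assert (Hterm : forall t x x', good x -> good x' -> Wq (p t) x x' * Wq (p t) x x' <= V t).
  { intros t x x' Hg Hg'. unfold V. rewrite sumC_sumL.
    assert (Hnn : forall x x', 0 <= indS c x * indS c x' * (Wq (p t) x x' * Wq (p t) x x')).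
    { intros. apply Rmult_le_pos; [apply Rmult_le_pos; apply indS_nn|]. apply Rle_0_sqr. }
    eapply Rle_trans; [|apply (sumL_term (all_configs N) _ x); [|apply good_in; auto]].
    - cbv beta. rewrite sumC_sumL.
      eapply Rle_trans; [|apply (sumL_term (all_configs N) _ x'); [|apply good_in; auto]].
      + cbv beta. unfold indS. destruct Hg as [_ ->]. destruct Hg' as [_ ->]. lra.
      + intros; apply Hnn.
    - intros b _. rewrite sumC_sumL. apply sumL_nonneg; intros; apply Hnn. }
  assert (HV : forall t, 0 <= t -> V t = 0).
  { apply (gronwall V (fun t => sumC N (fun x => sumC N (fun x' =>
        indS c x * indS c x' * (2 * Wq (p t) x x' * dW0 t x x')))) K).
    - intros t. unfold V. rewrite sumC_sumL.
      apply (derive_sumL (all_configs N) (fun s x => sumC N (fun x' => indS c x * indS c x' * (Wq (p s) x x' * Wq (p s) x x')))).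
      intros x Hx. rewrite sumC_sumL.
      apply (derive_sumL (all_configs N) (fun s x' => indS c x * indS c x' * (Wq (p s) x x' * Wq (p s) x x'))).
      intros x' Hx'. replace (indS c x * indS c x' * (2 * Wq (p t) x x' * dW0 t x x')) with
        ((indS c x * indS c x') * (2 * Wq (p t) x x' * dW0 t x x')) by ring.
      apply (deriv_sq_scal (fun s => Wq (p s) x x')). auto.
    - intros t Ht. unfold K.
      assert (HV0 : 0 <= V t).
      { unfold V. rewrite sumC_sumL. apply sumL_nonneg; intros. rewrite sumC_sumL.
        apply sumL_nonneg; intros.
        apply Rmult_le_pos; [apply Rmult_le_pos; apply indS_nn|]. apply Rle_0_sqr. }
      apply Rle_trans with (sumC N (fun x => sumC N (fun x' =>
          sumV N (fun m => (coef1 N T gamma x m + coef1 N T gamma x' m) * (2 * V t))))).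
      + rewrite !sumC_sumL. apply sumL_le; intros x Hx. rewrite !sumC_sumL. apply sumL_le; intros x' Hx'.
        assert (Hr : 0 <= sumV N (fun m => (coef1 N T gamma x m + coef1 N T gamma x' m) * (2 * V t))).
        { rewrite sumV_sumL. apply sumL_nonneg; intros m Hm. apply in_seq in Hm.
          assert (0 <= coef1 N T gamma x m) by (apply Hcoef; lia).
          assert (0 <= coef1 N T gamma x' m) by (apply Hcoef; lia).
          apply Rmult_le_pos; lra. }
        destruct (indS_c x Hx) as [E|[E Hg]]; [rewrite E; lra|].
        destruct (indS_c x' Hx') as [E'|[E' Hg']]; [rewrite E'; lra|].
        rewrite E, E', HdWeq by auto. unfold dW.
        assert (HO : 0 <= out_rate N T gamma x + out_rate N T gamma x').
        { assert (H1 := out_rate_nn N T gamma HT Hgamma x). assert (H2 := out_rate_nn N T gamma HT Hgamma x'). lra. }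
        assert (HW2 : 0 <= Wq (p t) x x' * Wq (p t) x x') by apply Rle_0_sqr.
        set (w := Wq (p t) x x') in *.
        rewrite Rmult_minus_distr_l.
        apply Rle_trans with (2 * w * sumV N (fun m => coef1 N T gamma x m * Wq (p t) (pc x m) x'
                 + coef1 N T gamma x' m * Wq (p t) x (pc x' m))); [nra|].
        rewrite sumV_sumL, <- sumL_scal. rewrite sumV_sumL. apply sumL_le; intros m Hm.
        apply in_seq in Hm.
        assert (Hc1 : 0 <= coef1 N T gamma x m) by (apply Hcoef; lia).
        assert (Hc2 : 0 <= coef1 N T gamma x' m) by (apply Hcoef; lia).
        assert (Hw : w * w <= V t) by (apply Hterm; auto).
        assert (Hw1 : Wq (p t) (pc x m) x' * Wq (p t) (pc x m) x' <= V t) by (apply Hterm; auto; apply pc_good; auto; lia).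
        assert (Hw2 : Wq (p t) x (pc x' m) * Wq (p t) x (pc x' m) <= V t) by (apply Hterm; auto; apply pc_good; auto; lia).
        set (w1 := Wq (p t) (pc x m) x') in *. set (w2 := Wq (p t) x (pc x' m)) in *.
        assert (B1 : 2 * w * (coef1 N T gamma x m * w1) <= coef1 N T gamma x m * (w * w + w1 * w1)).
        { assert (0 <= coef1 N T gamma x m * ((w - w1) * (w - w1))) by (apply Rmult_le_pos; [lra|apply Rle_0_sqr]).
          assert (coef1 N T gamma x m * (w * w + w1 * w1) - 2 * w * (coef1 N T gamma x m * w1)
                  = coef1 N T gamma x m * ((w - w1) * (w - w1))) by ring. lra. }
        assert (B2 : 2 * w * (coef1 N T gamma x' m * w2) <= coef1 N T gamma x' m * (w * w + w2 * w2)).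
        { assert (0 <= coef1 N T gamma x' m * ((w - w2) * (w - w2))) by (apply Rmult_le_pos; [lra|apply Rle_0_sqr]).
          assert (coef1 N T gamma x' m * (w * w + w2 * w2) - 2 * w * (coef1 N T gamma x' m * w2)
                  = coef1 N T gamma x' m * ((w - w2) * (w - w2))) by ring. lra. }
        assert (B3 : coef1 N T gamma x m * (w * w + w1 * w1) <= coef1 N T gamma x m * (2 * V t))
          by (apply Rmult_le_compat_l; lra).
        assert (B4 : coef1 N T gamma x' m * (w * w + w2 * w2) <= coef1 N T gamma x' m * (2 * V t))
          by (apply Rmult_le_compat_l; lra).
        lra.
      + rewrite !sumC_sumL. apply Req_le.
        rewrite (sumL_ext _ _ (fun x => sumC N (fun x' => sumV N (fun m => coef1 N T gamma x m + coef1 N T gamma x' m)) * (2 * V t))).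
        * rewrite sumL_scalr. ring.
        * intros x _. rewrite !sumC_sumL, <- sumL_scalr. apply sumL_ext; intros x' _.
          rewrite !sumV_sumL, <- sumL_scalr. reflexivity.
    - intros t _. unfold V. rewrite sumC_sumL. apply sumL_nonneg; intros. rewrite sumC_sumL.
      apply sumL_nonneg; intros.
      apply Rmult_le_pos; [apply Rmult_le_pos; apply indS_nn|]. apply Rle_0_sqr.
    - unfold V. apply sumL_zero; intros x Hx. apply sumL_zero; intros x' Hx'.
      assert (HW : Wq (p 0) x x' = 0).
      { unfold Wq. rewrite !H0 by (auto; apply mix_in; auto).
        change (prodL (seq 0 N) (fun i => pi i (node x i)) * prodL (seq 0 N) (fun i => pi i (node x' i)) -
          prodL (seq 0 N) (fun i => pi i (node (mix A x x') i)) * prodL (seq 0 N) (fun i => pi i (node (mix A x' x) i)) = 0).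
        rewrite !prodL_mult.
        apply all_configs_len in Hx. apply all_configs_len in Hx'.
        rewrite (prodL_ext _ (fun i => pi i (node (mix A x x') i) * pi i (node (mix A x' x) i))
          (fun i => pi i (node x i) * pi i (node x' i))); [ring|].
        intros i _. rewrite !node_mix by congruence. destruct (A i); ring. }
      rewrite HW. ring. }
  intros t Ht x x' Hg Hg'. assert (H := Hterm t x x' Hg Hg'). rewrite HV in H by auto.
  assert (0 <= Wq (p t) x x' * Wq (p t) x x') by apply Rle_0_sqr. nra.
Qed.
End Split.

Definition sum3 (g : st -> R) := g Sus + g Inf + g Rem.

Lemma sumC_S3 n f : sumC (S n) f = sumC n (fun c => sum3 (fun s => f (s :: c))).
Proof. rewrite sumC_S. reflexivity. Qed.

Lemma sumC_sum3 n h :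
  sumC n (fun c => sum3 (fun s => h c s)) = sum3 (fun s => sumC n (fun c => h c s)).
Proof. unfold sum3. rewrite !sumC_sumL, <- !sumL_plus. reflexivity. Qed.

Lemma mix_cons A a b x x' : length x = length x' ->
  mix A (a :: x) (b :: x') = (if A 0%nat then a else b) :: mix (fun k => A (S k)) x x'.
Proof.
  intros H. apply config_ext.
  - rewrite mix_length; simpl; rewrite mix_length; auto.
  - intros [|k] Hk.
    + rewrite node_mix by (simpl; auto). unfold node; simpl. destruct (A 0%nat); auto.
    + rewrite node_mix by (simpl; auto). unfold node at 3; simpl. fold (node (mix (fun k => A (S k)) x x') k).
      rewrite node_mix by auto. unfold node; simpl. auto.
Qed.

Lemma sum3_ext g h : (forall s, g s = h s) -> sum3 g = sum3 h.
Proof. intros H; unfold sum3; rewrite !H; auto. Qed.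

Lemma quad_swap n G :
  sumC n (fun c => sum3 (fun s => sumC n (fun c' => sum3 (fun s' => G s s' c c')))) =
  sum3 (fun s => sum3 (fun s' => sumC n (fun c => sumC n (fun c' => G s s' c c')))).
Proof.
  rewrite (sumC_ext n _ (fun c => sum3 (fun s => sum3 (fun s' => sumC n (fun c' => G s s' c c'))))).
  2:{ intros c _. apply sum3_ext; intros s. apply sumC_sum3. }
  rewrite sumC_sum3. apply sum3_ext; intros s. apply sumC_sum3.
Qed.

Lemma sum_mix_swap n : forall A (K : config -> config -> R),
  sumC n (fun x => sumC n (fun x' => K (mix A x x') (mix A x' x))) =
  sumC n (fun x => sumC n (fun x' => K x x')).
Proof.
  induction n; intros A K.
  - unfold sumC; simpl. unfold mix; simpl. reflexivity.
  - rewrite sumC_S3.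
    rewrite (sumC_ext n _ (fun c => sum3 (fun s => sumC n (fun c' => sum3 (fun s' =>
       K ((if A 0%nat then s else s') :: mix (fun k => A (S k)) c c')
         ((if A 0%nat then s' else s) :: mix (fun k => A (S k)) c' c)))))).
    2:{ intros c Hc. apply sum3_ext; intros s. rewrite sumC_S3.
        apply sumC_ext; intros c' Hc'; apply all_configs_len in Hc; apply all_configs_len in Hc'.
        apply sum3_ext; intros s'. rewrite !mix_cons by congruence; reflexivity. }
    rewrite sumC_S3.
    rewrite (sumC_ext n (fun c => sum3 (fun s => sumC (S n) (fun x' => K (s :: c) x')))
      (fun c => sum3 (fun s => sumC n (fun c' => sum3 (fun s' => K (s :: c) (s' :: c')))))).
    2:{ intros c _. apply sum3_ext; intros s. rewrite sumC_S3. reflexivity. }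
    rewrite !quad_swap.
    rewrite (sum3_ext _ (fun s => sum3 (fun s' => sumC n (fun c => sumC n (fun c' =>
       K ((if A 0%nat then s else s') :: c) ((if A 0%nat then s' else s) :: c')))))).
    2:{ intros s. apply sum3_ext; intros s'.
        apply (IHn (fun k => A (S k)) (fun y y' => K ((if A 0%nat then s else s') :: y) ((if A 0%nat then s' else s) :: y'))). }
    destruct (A 0%nat); auto.
    unfold sum3. ring.
Qed.

Lemma closure N T gamma A c p pi t
  (Hc : (c < N)%nat) (HAc : A c = false)
  (Hsep : forall m k, (m < N)%nat -> (k < N)%nat -> A m = true -> A k = false -> k <> c ->
     T m k = 0 /\ T k m = 0)
  (HT : forall i j, (i < N)%nat -> (j < N)%nat -> 0 <= T i j)
  (Hgamma : forall i, (i < N)%nat -> 0 < gamma i)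
  (HM : master_eq N T gamma p) (HI : indep_init N pi p) (Ht : 0 <= t)
  (f g : config -> R)
  (Hf : forall x y, length x = N -> length y = N ->
     (forall k, (k < N)%nat -> A k = true -> node x k = node y k) -> f x = f y)
  (Hg : forall x y, length x = N -> length y = N ->
     (forall k, (k < N)%nat -> A k = false -> node x k = node y k) -> g x = g y) :
  expect N p t (fun x => indS c x * f x * g x) * expect N p t (indS c) =
  expect N p t (fun x => indS c x * f x) * expect N p t (fun x => indS c x * g x).
Proof.
  unfold expect. rewrite !sumC_sumL, <- !sumL_scalr.
  rewrite (sumL_ext _ (fun x => p t x * (indS c x * f x) * sumL (all_configs N) (fun x' => p t x' * (indS c x' * g x')))
    (fun x => sumC N (fun x' => p t x * (indS c x * f x) * (p t x' * (indS c x' * g x'))))).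
  2:{ intros x _. rewrite sumC_sumL, <- sumL_scal. reflexivity. }
  change (sumL (all_configs N) (fun x => sumC N (fun x' => p t x * (indS c x * f x) * (p t x' * (indS c x' * g x'))))) with (sumC N (fun x => sumC N (fun x' => p t x * (indS c x * f x) * (p t x' * (indS c x' * g x'))))).
  rewrite <- (sum_mix_swap N A (fun y y' => p t y * (indS c y * f y) * (p t y' * (indS c y' * g y')))).
  apply sumC_ext; intros x Hx. rewrite <- sumL_scal.
  rewrite sumC_sumL. apply sumL_ext; intros x' Hx'.
  pose proof Hx as Hlx. pose proof Hx' as Hlx'. apply all_configs_len in Hlx, Hlx'.
  assert (E1 : f (mix A x x') = f x).
  { apply Hf; try rewrite mix_length; auto. intros k _ Ak. rewrite node_mix, Ak by congruence; auto. }
  assert (E2 : g (mix A x' x) = g x).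
  { apply Hg; try rewrite mix_length; auto. intros k _ Ak. rewrite node_mix, Ak by congruence; auto. }
  assert (E3 : indS c (mix A x x') = indS c x').
  { unfold indS. rewrite node_mix, HAc by congruence; auto. }
  assert (E4 : indS c (mix A x' x) = indS c x).
  { unfold indS. rewrite node_mix, HAc by congruence; auto. }
  rewrite E1, E2, E3, E4.
  destruct (indS_c N c x Hx) as [Z|[Z Gx]]; [rewrite Z; ring|].
  destruct (indS_c N c x' Hx') as [Z'|[Z' Gx']]; [rewrite Z'; ring|].
  assert (HW := W_zero N T gamma A c Hc HAc Hsep HT Hgamma p pi HM HI t Ht x x' Gx Gx').
  unfold Wq in HW.
  replace (p t (mix A x x') * (indS c x' * f x) * (p t (mix A x' x) * (indS c x * g x))) with
    ((p t (mix A x x') * p t (mix A x' x)) * (indS c x' * f x * indS c x * g x)) by ring.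
  replace (p t (mix A x x') * p t (mix A x' x)) with (p t x * p t x') by lra.
  ring.
Qed.

Lemma chain_app_l T l1 l2 : chain T (l1 ++ l2) -> chain T l1.
Proof.
  induction l1 as [|a l1 IH]; intros H; [simpl; auto|].
  destruct l1 as [|b l1]; [simpl; auto|]. simpl in H. destruct H as [H1 H2]. split; [auto|apply IH; exact H2].
Qed.

Lemma last_cons_ne {B} (a d : B) l : last (a :: l) d = last l a.
Proof.
  revert a d; induction l as [|x l IH]; intros a d; [reflexivity|].
  change (last (x :: l) d = last (x :: l) a). rewrite !IH. reflexivity.
Qed.

Lemma chain_snoc T a l b : chain T (a :: l) -> adj T (last l a) b -> chain T (a :: l ++ [b]).
Proof.
  revert a; induction l as [|x l IH]; intros a H Hadj.
  - simpl in *. split; auto.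
  - destruct H as [H1 H2]. rewrite last_cons_ne in Hadj. simpl. split; [exact H1|apply IH; auto].
Qed.

Lemma last_in {B} (a : B) l : In (last l a) (a :: l).
Proof.
  revert a; induction l as [|x l IH]; intros a; [simpl; auto|].
  rewrite last_cons_ne. right. apply IH.
Qed.

Lemma last_snoc {B} (a b : B) l : last (l ++ [b]) a = b.
Proof. induction l; simpl; auto. destruct (l ++ [b]) eqn:E; auto. destruct l; discriminate. Qed.

Section Graph.
Variable N : nat.
Variable T : nat -> nat -> R.
Hypothesis HT : forall i j, (i < N)%nat -> (j < N)%nat -> 0 <= T i j.
Hypothesis Htree : is_forest N T.
Variables c i : nat.
Hypothesis Hc : (c < N)%nat.
Hypothesis Hi : (i < N)%nat.
Hypothesis Hic : i <> c.
Hypothesis Hadj : adj T c i.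

Definition Reach (m : nat) : Prop := exists l, NoDup (i :: l) /\ (forall x, In x (i :: l) -> (x < N)%nat)
  /\ ~ In c (i :: l) /\ chain T (i :: l) /\ last l i = m.

Definition Aset (m : nat) : bool := if excluded_middle_informative (Reach m) then true else false.

Lemma Aset_c : Aset c = false.
Proof.
  unfold Aset. destruct (excluded_middle_informative (Reach c)) as [[l [_ [_ [Hn [_ Hl]]]]]|]; auto.
  exfalso. apply Hn. rewrite <- Hl. apply last_in.
Qed.

Lemma Aset_i : Aset i = true.
Proof.
  unfold Aset. destruct (excluded_middle_informative (Reach i)) as [|Hn]; auto.
  exfalso. apply Hn. exists []. repeat split; simpl; auto.
  - constructor; auto. constructor.
  - intros x [<-|[]]; auto.
  - intros [H|[]]; auto.
Qed.

Lemma Reach_ext m k : Reach m -> (k < N)%nat -> k <> c -> adj T m k -> Reach k.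
Proof.
  intros [l [Hnd [HN [Hnc [Hch Hl]]]]] Hk Hkc Hmk.
  destruct (in_dec Nat.eq_dec k (i :: l)) as [Hin|Hin].
  - destruct Hin as [<-|Hin].
    + exists []. repeat split; simpl; auto.
      * constructor; auto. constructor.
      * intros x [<-|[]]; auto.
      * intros [H|[]]; auto.
    + apply in_split in Hin. destruct Hin as [l1 [l2 E]]. subst l.
      exists (l1 ++ [k]). repeat split.
      * rewrite app_comm_cons in Hnd. rewrite app_comm_cons.
        apply NoDup_app_remove_r with l2. rewrite <- app_assoc. simpl. auto.
      * intros x Hx. apply HN. simpl in *. destruct Hx as [Hx|Hx]; auto. right.
        apply in_app_or in Hx. apply in_or_app. destruct Hx as [Hx|[<-|[]]]; auto. right; left; auto.
      * intros Hx. apply Hnc. simpl in *. destruct Hx as [Hx|Hx]; auto. right.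
        apply in_app_or in Hx. apply in_or_app. destruct Hx as [Hx|[<-|[]]]; auto. right; left; auto.
      * replace (i :: l1 ++ k :: l2) with ((i :: l1 ++ [k]) ++ l2) in Hch by (simpl; rewrite <- app_assoc; auto).
        apply chain_app_l in Hch. auto.
      * apply last_snoc.
  - exists (l ++ [k]). repeat split.
    + rewrite app_comm_cons. apply NoDup_app; auto.
      * constructor; auto. constructor.
      * intros x Hx Hx'. destruct Hx' as [<-|[]]. contradiction.
    + intros x Hx. rewrite app_comm_cons in Hx. apply in_app_or in Hx. destruct Hx as [Hx|[<-|[]]]; auto.
    + intros Hx. rewrite app_comm_cons in Hx. apply in_app_or in Hx. destruct Hx as [Hx|[Hx|[]]]; auto.
    + apply chain_snoc; auto. rewrite Hl. auto.
    + apply last_snoc.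
Qed.

Lemma Aset_sep : forall m k, (m < N)%nat -> (k < N)%nat -> Aset m = true -> Aset k = false -> k <> c ->
  T m k = 0 /\ T k m = 0.
Proof.
  intros m k Hm Hk Am Ak Hkc. unfold Aset in Am, Ak.
  destruct (excluded_middle_informative (Reach m)) as [Rm|]; [|discriminate].
  destruct (excluded_middle_informative (Reach k)) as [Rk|Rk]; [discriminate|].
  assert (~ adj T m k) by (intros H; apply Rk; apply (Reach_ext m k); auto).
  unfold adj in H. assert (0 <= T m k) by auto. assert (0 <= T k m) by auto.
  split; apply Rle_antisym; auto; apply Rnot_lt_le; intros Hlt; apply H; auto.
Qed.

Lemma Aset_k k : (k < N)%nat -> k <> i -> T c k > 0 -> Aset k = false.
Proof.
  intros Hk Hki Hck. unfold Aset. destruct (excluded_middle_informative (Reach k)) as [[l [Hnd [HN [Hnc [Hch Hl]]]]]|]; auto.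
  exfalso. destruct l as [|y l]; [simpl in Hl; congruence|].
  apply (Htree c (i :: y :: l)).
  - constructor; auto.
  - intros x [<-|Hx]; auto.
  - simpl; lia.
  - simpl. split; auto.
  - rewrite last_cons_ne. rewrite Hl. right. auto.
Qed.
End Graph.

Section Final.
Variable N : nat.
Variable T : nat -> nat -> R.
Variable gamma : nat -> R.

Lemma indS_upd' x m s a : (m < length x)%nat ->
  indS a (upd x m s) = if Nat.eq_dec a m then (match s with Sus => 1 | _ => 0 end) else indS a x.
Proof. intros H. unfold indS. rewrite node_upd by auto. destruct (Nat.eq_dec a m); auto. Qed.
Lemma indI_upd' x m s a : (m < length x)%nat ->
  indI a (upd x m s) = if Nat.eq_dec a m then (match s with Inf => 1 | _ => 0 end) else indI a x.
Proof. intros H. unfold indI. rewrite node_upd by auto. destruct (Nat.eq_dec a m); auto. Qed.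

Definition Dm (f : config -> R) x m :=
  indS m x * inf_rate N T x m * (f (upd x m Inf) - f x) + indI m x * gamma m * (f (upd x m Rem) - f x).

Lemma gen_Dm f x : gen N T gamma f x = sumV N (Dm f x).
Proof. reflexivity. Qed.

Ltac solve_D a m x :=
  unfold Dm; rewrite ?indS_upd', ?indI_upd' by auto;
  repeat match goal with |- context [Nat.eq_dec ?u ?v] => destruct (Nat.eq_dec u v) end;
  subst; unfold indS, indI; repeat match goal with |- context [node x ?u] => destruct (node x u) end; ring.

Lemma D_S a x m : (m < length x)%nat ->
  Dm (indS a) x m = if Nat.eq_dec m a then - (indS a x * inf_rate N T x a) else 0.
Proof.
  intros H. unfold Dm. rewrite !indS_upd' by auto.
  destruct (Nat.eq_dec a m), (Nat.eq_dec m a); subst; try lia; unfold indS, indI;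
  destruct (node x m); ring.
Qed.

Lemma D_I a x m : (m < length x)%nat ->
  Dm (indI a) x m = if Nat.eq_dec m a then indS a x * inf_rate N T x a - gamma a * indI a x else 0.
Proof.
  intros H. unfold Dm. rewrite !indI_upd' by auto.
  destruct (Nat.eq_dec a m), (Nat.eq_dec m a); subst; try lia; unfold indS, indI;
  destruct (node x m); ring.
Qed.

Lemma D_SI a b x m : a <> b -> (m < length x)%nat ->
  Dm (fun y => indS a y * indI b y) x m =
  (if Nat.eq_dec m a then - (indS a x * indI b x * inf_rate N T x a) else 0)
  + (if Nat.eq_dec m b then indS a x * indS b x * inf_rate N T x b - gamma b * (indS a x * indI b x) else 0).
Proof.
  intros Hab H. unfold Dm. rewrite !indS_upd', !indI_upd' by auto.
  destruct (Nat.eq_dec a m), (Nat.eq_dec m a), (Nat.eq_dec b m), (Nat.eq_dec m b); subst; try lia;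
  unfold indS, indI; repeat match goal with |- context [node x ?u] => destruct (node x u) end; ring.
Qed.

Lemma D_SS a b x m : a <> b -> (m < length x)%nat ->
  Dm (fun y => indS a y * indS b y) x m =
  (if Nat.eq_dec m a then - (indS a x * indS b x * inf_rate N T x a) else 0)
  + (if Nat.eq_dec m b then - (indS a x * indS b x * inf_rate N T x b) else 0).
Proof.
  intros Hab H. unfold Dm. rewrite !indS_upd' by auto.
  destruct (Nat.eq_dec a m), (Nat.eq_dec m a), (Nat.eq_dec b m), (Nat.eq_dec m b); subst; try lia;
  unfold indS, indI; repeat match goal with |- context [node x ?u] => destruct (node x u) end; ring.
Qed.
End Final.

Lemma sum_delta_const N a X : (a < N)%nat -> sumV N (fun m => if Nat.eq_dec m a then X else 0) = X.
Proof. intros H. rewrite sumV_sumL. apply (sumL_delta_nat N a (fun _ => X) H). Qed.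

Lemma expect_ext N p t f g : (forall x, In x (all_configs N) -> f x = g x) -> expect N p t f = expect N p t g.
Proof. intros H. unfold expect. apply sumC_ext; intros; rewrite H; auto. Qed.

Lemma exp_inf N T p t h a :
  sumC N (fun x => p t x * (h x * inf_rate N T x a)) = sumV N (fun k => T a k * expect N p t (fun x => h x * indI k x)).
Proof.
  unfold expect, inf_rate.
  rewrite (sumC_ext N _ (fun x => sumV N (fun k => T a k * (p t x * (h x * indI k x))))).
  2:{ intros x _. rewrite !sumV_sumL, <- sumL_scal, <- sumL_scal. apply sumL_ext; intros; ring. }
  rewrite sumC_sumL. setoid_rewrite sumV_sumL. rewrite sumL_swap. apply sumL_ext; intros k _.
  rewrite sumL_scal. reflexivity.
Qed.

Lemma close_term N T gamma p pi t
  (HT : forall i j, (i < N)%nat -> (j < N)%nat -> 0 <= T i j)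
  (HTii : forall i, (i < N)%nat -> T i i = 0)
  (Hgamma : forall i, (i < N)%nat -> 0 < gamma i)
  (Htree : is_forest N T)
  (HM : master_eq N T gamma p) (HI : indep_init N pi p) (Ht : 0 <= t)
  (Hpos : forall y, In y (all_configs N) -> 0 <= p t y)
  c a k (phi : config -> R) (Hc : (c < N)%nat) (Ha : (a < N)%nat) (Hk : (k < N)%nat)
  (Hac : a <> c) (Hadj : adj T c a) (Hka : k <> a)
  (Hphi : forall x y, node x a = node y a -> phi x = phi y)
  (Hphib : forall x, 0 <= phi x <= 1) :
  T c k * expect N p t (fun x => indS c x * phi x * indI k x) =
  T c k * sdiv (expect N p t (fun x => indS c x * phi x) * expect N p t (fun x => indS c x * indI k x))
     (expect N p t (indS c)).
Proof.
  destruct (Req_dec (T c k) 0) as [Z|NZ]; [rewrite Z; ring|].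
  assert (Hck : T c k > 0) by (assert (0 <= T c k) by auto; lra).
  assert (Hkc : k <> c) by (intros ->; apply NZ; auto).
  set (A := Aset N T c a).
  assert (EQ := closure N T gamma A c p pi t Hc (Aset_c N T c a)
    (Aset_sep N T HT c a Hc Hac Hadj) HT Hgamma HM HI Ht phi (indI k)).
  assert (EQ' : expect N p t (fun x => indS c x * phi x * indI k x) * expect N p t (indS c) =
                expect N p t (fun x => indS c x * phi x) * expect N p t (fun x => indS c x * indI k x)).
  { apply EQ.
    - intros x y _ _ H. apply Hphi. apply H; auto. apply Aset_i; auto.
    - intros x y _ _ H. unfold indI. rewrite H; auto. apply (Aset_k N T Htree c a Hc Ha Hac Hadj k Hk Hka Hck). }
  unfold sdiv. destruct (Req_EM_T (expect N p t (indS c)) 0) as [E0|E0].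
  - assert (0 <= expect N p t (fun x => indS c x * phi x * indI k x) <= expect N p t (indS c)).
    { unfold expect. rewrite !sumC_sumL. split.
      - apply sumL_nonneg; intros x Hx. apply Rmult_le_pos; auto.
        assert (H1 := indS_nn c x). assert (H2 := indI_nn k x). assert (H3 := Hphib x).
        apply Rmult_le_pos; [apply Rmult_le_pos|]; lra.
      - apply sumL_le; intros x Hx. apply Rmult_le_compat_l; auto.
        assert (indS c x <= 1) by (unfold indS; destruct (node x c); lra).
        assert (indI k x <= 1) by (unfold indI; destruct (node x k); lra).
        assert (H1 := indS_nn c x). assert (H2 := indI_nn k x). assert (H3 := Hphib x).
        assert (phi x * indI k x <= 1) by nra.
        assert (0 <= phi x * indI k x) by nra. nra. }
    rewrite E0 in H. assert (expect N p t (fun x => indS c x * phi x * indI k x) = 0) by lra.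
    rewrite H0; ring.
  - f_equal. rewrite <- EQ'. field. auto.
Qed.

Lemma prod_nn (pi : nat -> st -> R) N x l : (forall i s, (i < N)%nat -> 0 <= pi i s) ->
  (forall i, In i l -> (i < N)%nat) -> 0 <= fold_right Rmult 1 (map (fun i => pi i (node x i)) l).
Proof.
  intros Hpi. induction l; intros H; simpl; [lra|].
  apply Rmult_le_pos; [apply Hpi, H; left; auto|apply IHl; intros; apply H; right; auto].
Qed.

Lemma gen_sum N T gamma f x G : length x = N ->
  (forall m, (m < N)%nat -> Dm N T gamma f x m = G m) -> gen N T gamma f x = sumV N G.
Proof.
  intros Hl H. rewrite gen_Dm, !sumV_sumL. apply sumL_ext; intros m Hm. apply in_seq in Hm. apply H; lia.
Qed.

Lemma expect_zero N p t f : (forall x, In x (all_configs N) -> f x = 0) -> expect N p t f = 0.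
Proof. intros H. unfold expect. apply sumL_zero; intros x Hx. rewrite H; auto; ring. Qed.

Lemma adj_sym T a b : adj T a b -> adj T b a.
Proof. unfold adj; tauto. Qed.

Lemma indS_b a x : 0 <= indS a x <= 1.
Proof. unfold indS; destruct (node x a); lra. Qed.
Lemma indI_b a x : 0 <= indI a x <= 1.
Proof. unfold indI; destruct (node x a); lra. Qed.


Section Main.
Variable N : nat.
Variable T : nat -> nat -> R.
Variable gamma : nat -> R.
Variable pi : nat -> st -> R.
Variable p : R -> config -> R.
Hypothesis HT : forall i j, (i < N)%nat -> (j < N)%nat -> 0 <= T i j.
Hypothesis HTii : forall i, (i < N)%nat -> T i i = 0.
Hypothesis Hgamma : forall i, (i < N)%nat -> 0 < gamma i.
Hypothesis Htree : is_forest N T.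
Hypothesis Hmaster : master_eq N T gamma p.
Hypothesis Hinit : indep_init N pi p.
Variable t : R.
Hypothesis Ht : 0 <= t.

Let E := expect N p t.

Lemma Hpos : forall y, In y (all_configs N) -> 0 <= p t y.
Proof.
  apply (p_nonneg N T gamma HT Hgamma p Hmaster); auto.
  intros x Hx. destruct Hinit as [Hpi [_ H0]]. rewrite H0 by auto.
  apply prod_nn with N; auto. intros i Hi; apply in_seq in Hi; lia.
Qed.

Lemma Hgen f : derivable_pt_lim (fun s => expect N p s f) t (sumC N (fun x => p t x * gen N T gamma f x)).
Proof. apply expect_deriv; auto. Qed.

Lemma CT c a k phi : (c < N)%nat -> (a < N)%nat -> (k < N)%nat -> a <> c -> adj T c a -> k <> a ->
     (forall x y, node x a = node y a -> phi x = phi y) -> (forall x, 0 <= phi x <= 1) ->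
     T c k * E (fun x => indS c x * phi x * indI k x) =
     T c k * sdiv (E (fun x => indS c x * phi x) * E (fun x => indS c x * indI k x)) (E (indS c)).
Proof. intros. apply (close_term N T gamma p pi t HT HTii Hgamma Htree Hmaster Hinit Ht Hpos c a k phi); auto. Qed.

Lemma der_S i : (i < N)%nat -> derivable_pt_lim (fun s => expect N p s (indS i)) t
       (- sumV N (fun j => T i j * E (fun x => indS i x * indI j x))).
Proof.
  intros Hi.
  replace (- sumV N (fun j => T i j * E (fun x => indS i x * indI j x)))
    with (sumC N (fun x => p t x * gen N T gamma (indS i) x)); [apply Hgen|].
  rewrite (sumC_ext N _ (fun x => - (p t x * (indS i x * inf_rate N T x i)))).
  - rewrite sumC_sumL, sumL_opp, <- sumC_sumL, exp_inf. reflexivity.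
  - intros x Hx. apply all_configs_len in Hx.
    rewrite (gen_sum N T gamma _ x (fun m => if Nat.eq_dec m i then - (indS i x * inf_rate N T x i) else 0)); auto.
    + rewrite sum_delta_const by auto. ring.
    + intros m Hm. apply D_S. lia.
Qed.

Lemma der_I i : (i < N)%nat -> derivable_pt_lim (fun s => expect N p s (indI i)) t
       (sumV N (fun j => T i j * E (fun x => indS i x * indI j x)) - gamma i * E (indI i)).
Proof.
  intros Hi.
  replace (sumV N (fun j => T i j * E (fun x => indS i x * indI j x)) - gamma i * E (indI i))
    with (sumC N (fun x => p t x * gen N T gamma (indI i) x)); [apply Hgen|].
  rewrite (sumC_ext N _ (fun x => p t x * (indS i x * inf_rate N T x i) - gamma i * (p t x * indI i x))).
  - rewrite sumC_sumL, sumL_minus, sumL_scal, <- !sumC_sumL, exp_inf. reflexivity.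
  - intros x Hx. apply all_configs_len in Hx.
    rewrite (gen_sum N T gamma _ x (fun m => if Nat.eq_dec m i then indS i x * inf_rate N T x i - gamma i * indI i x else 0)); auto.
    + rewrite sum_delta_const by auto. ring.
    + intros m Hm. apply D_I. lia.
Qed.
Lemma claimA i j : (i < N)%nat -> (j < N)%nat -> i <> j -> adj T i j ->
  sumV N (fun k => T j k * E (fun x => indS i x * indS j x * indI k x)) =
  sumV N (fun k => if Nat.eq_dec k i then 0 else
           T j k * sdiv (E (fun x => indS i x * indS j x) * E (fun x => indS j x * indI k x)) (E (indS j))).
Proof.
  intros Hi Hj Hij Hadj. rewrite (sumV_split N i) by auto.
  assert (Z : E (fun x => indS i x * indS j x * indI i x) = 0).
  { unfold E. apply expect_zero; intros x _. unfold indS, indI. destruct (node x i); ring. }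
  rewrite Z, Rmult_0_r, Rplus_0_r. rewrite !sumV_sumL. apply sumL_ext; intros k Hk. apply in_seq in Hk.
  destruct (Nat.eq_dec k i) as [|Hki]; auto.
  assert (H := CT j i k (indS i) Hj Hi ltac:(lia) Hij (adj_sym T i j Hadj) Hki).
  unfold E in *.
  rewrite (expect_ext N p t (fun x => indS i x * indS j x * indI k x) (fun x => indS j x * indS i x * indI k x))
    by (intros; ring).
  rewrite (expect_ext N p t (fun x => indS i x * indS j x) (fun x => indS j x * indS i x)) by (intros; ring).
  apply H.
  - intros x y E1. unfold indS. rewrite E1; auto.
  - intros; apply indS_b.
Qed.

Lemma claimB i j : (i < N)%nat -> (j < N)%nat -> i <> j -> adj T i j ->
  sumV N (fun k => T i k * E (fun x => indS i x * indI j x * indI k x)) =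
  sumV N (fun k => if Nat.eq_dec k j then 0 else
           T i k * sdiv (E (fun x => indS i x * indI k x) * E (fun x => indS i x * indI j x)) (E (indS i)))
  + T i j * E (fun x => indS i x * indI j x).
Proof.
  intros Hi Hj Hij Hadj. rewrite (sumV_split N j) by auto.
  assert (Z : E (fun x => indS i x * indI j x * indI j x) = E (fun x => indS i x * indI j x)).
  { unfold E. apply expect_ext; intros x _. unfold indS, indI. destruct (node x j); ring. }
  rewrite Z. f_equal. rewrite !sumV_sumL. apply sumL_ext; intros k Hk. apply in_seq in Hk.
  destruct (Nat.eq_dec k j) as [|Hkj]; auto.
  assert (H := CT i j k (indI j) Hi Hj ltac:(lia) (not_eq_sym Hij) Hadj Hkj).
  rewrite (Rmult_comm (E (fun x => indS i x * indI k x))).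
  apply H.
  - intros x y E1. unfold indI. rewrite E1; auto.
  - intros; apply indI_b.
Qed.

Lemma claimC i j : (i < N)%nat -> (j < N)%nat -> i <> j -> adj T i j ->
  sumV N (fun k => T i k * E (fun x => indS i x * indS j x * indI k x)) =
  sumV N (fun k => if Nat.eq_dec k j then 0 else
           T i k * sdiv (E (fun x => indS i x * indS j x) * E (fun x => indS i x * indI k x)) (E (indS i))).
Proof.
  intros Hi Hj Hij Hadj. rewrite (sumV_split N j) by auto.
  assert (Z : E (fun x => indS i x * indS j x * indI j x) = 0).
  { unfold E. apply expect_zero; intros x _. unfold indS, indI. destruct (node x j); ring. }
  rewrite Z, Rmult_0_r, Rplus_0_r. rewrite !sumV_sumL. apply sumL_ext; intros k Hk. apply in_seq in Hk.
  destruct (Nat.eq_dec k j) as [|Hkj]; auto.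
  apply (CT i j k (indS j) Hi Hj ltac:(lia) (not_eq_sym Hij) Hadj Hkj).
  - intros x y E1. unfold indS. rewrite E1; auto.
  - intros; apply indS_b.
Qed.
Lemma der_SI i j : (i < N)%nat -> (j < N)%nat -> i <> j -> adj T i j ->
  derivable_pt_lim (fun s => expect N p s (fun x => indS i x * indI j x)) t
       (sumV N (fun k => if Nat.eq_dec k i then 0 else
           T j k * sdiv (E (fun x => indS i x * indS j x)
                         * E (fun x => indS j x * indI k x)) (E (indS j)))
        - sumV N (fun k => if Nat.eq_dec k j then 0 else
           T i k * sdiv (E (fun x => indS i x * indI k x)
                         * E (fun x => indS i x * indI j x)) (E (indS i)))
        - T i j * E (fun x => indS i x * indI j x)
        - gamma j * E (fun x => indS i x * indI j x)).
Proof.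
  intros Hi Hj Hij Hadj.
  rewrite <- claimA by auto.
  match goal with |- derivable_pt_lim _ _ (?a - ?b - ?c - ?d) =>
    replace (a - b - c - d) with (a - (b + c) - d) by ring end.
  rewrite <- claimB by auto.
  match goal with |- derivable_pt_lim _ _ ?v => replace v with
    (sumC N (fun x => p t x * gen N T gamma (fun y => indS i y * indI j y) x)); [apply Hgen|] end.
  rewrite (sumC_ext N _ (fun x => p t x * ((indS i x * indS j x) * inf_rate N T x j)
     - p t x * ((indS i x * indI j x) * inf_rate N T x i) - gamma j * (p t x * (indS i x * indI j x)))).
  - rewrite sumC_sumL, !sumL_minus, sumL_scal, <- !sumC_sumL, !exp_inf. unfold E. reflexivity.
  - intros x Hx. apply all_configs_len in Hx.
    rewrite (gen_sum N T gamma _ x (fun m =>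
       (if Nat.eq_dec m i then - (indS i x * indI j x * inf_rate N T x i) else 0)
       + (if Nat.eq_dec m j then indS i x * indS j x * inf_rate N T x j - gamma j * (indS i x * indI j x) else 0))); auto.
    + rewrite sumV_sumL, sumL_plus, <- !sumV_sumL, !sum_delta_const by auto. ring.
    + intros m Hm. apply D_SI; auto. lia.
Qed.

Lemma der_SS i j : (i < N)%nat -> (j < N)%nat -> i <> j -> adj T i j ->
  derivable_pt_lim (fun s => expect N p s (fun x => indS i x * indS j x)) t
       (- sumV N (fun k => if Nat.eq_dec k j then 0 else
           T i k * sdiv (E (fun x => indS i x * indS j x)
                         * E (fun x => indS i x * indI k x)) (E (indS i)))
        - sumV N (fun k => if Nat.eq_dec k i then 0 else
           T j k * sdiv (E (fun x => indS i x * indS j x)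
                         * E (fun x => indS j x * indI k x)) (E (indS j)))).
Proof.
  intros Hi Hj Hij Hadj.
  rewrite <- claimA, <- claimC by auto.
  match goal with |- derivable_pt_lim _ _ ?v => replace v with
    (sumC N (fun x => p t x * gen N T gamma (fun y => indS i y * indS j y) x)); [apply Hgen|] end.
  rewrite (sumC_ext N _ (fun x => - (p t x * ((indS i x * indS j x) * inf_rate N T x i))
     - p t x * ((indS i x * indS j x) * inf_rate N T x j))).
  - rewrite sumC_sumL, !sumL_minus, sumL_opp, <- !sumC_sumL, !exp_inf. unfold E. reflexivity.
  - intros x Hx. apply all_configs_len in Hx.
    rewrite (gen_sum N T gamma _ x (fun m =>
       (if Nat.eq_dec m i then - (indS i x * indS j x * inf_rate N T x i) else 0)
       + (if Nat.eq_dec m j then - (indS i x * indS j x * inf_rate N T x j) else 0))); auto.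
    + rewrite sumV_sumL, sumL_plus, <- !sumV_sumL, !sum_delta_const by auto. ring.
    + intros m Hm. apply D_SS; auto. lia.
Qed.
End Main.

Theorem theorem3 (N : nat) (T : nat -> nat -> R) (gamma : nat -> R)
  (pi : nat -> st -> R) (p : R -> config -> R)
  (HT : forall i j, (i < N)%nat -> (j < N)%nat -> 0 <= T i j)
  (HTii : forall i, (i < N)%nat -> T i i = 0)
  (Hgamma : forall i, (i < N)%nat -> 0 < gamma i)
  (Htree : is_forest N T)
  (Hmaster : master_eq N T gamma p)
  (Hinit : indep_init N pi p) :
  let E := expect N p in
  forall t : R, 0 <= t ->
  (forall i : nat, (i < N)%nat ->
     derivable_pt_lim (fun s => E s (indS i)) t
       (- sumV N (fun j => T i j * E t (fun x => indS i x * indI j x)))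
   /\
     derivable_pt_lim (fun s => E s (indI i)) t
       (sumV N (fun j => T i j * E t (fun x => indS i x * indI j x))
        - gamma i * E t (indI i)))
  /\
  (forall i j : nat, (i < N)%nat -> (j < N)%nat -> i <> j -> adj T i j ->
     derivable_pt_lim (fun s => E s (fun x => indS i x * indI j x)) t
       (sumV N (fun k => if Nat.eq_dec k i then 0 else
           T j k * sdiv (E t (fun x => indS i x * indS j x)
                         * E t (fun x => indS j x * indI k x)) (E t (indS j)))
        - sumV N (fun k => if Nat.eq_dec k j then 0 else
           T i k * sdiv (E t (fun x => indS i x * indI k x)
                         * E t (fun x => indS i x * indI j x)) (E t (indS i)))
        - T i j * E t (fun x => indS i x * indI j x)
        - gamma j * E t (fun x => indS i x * indI j x))
   /\
     derivable_pt_lim (fun s => E s (fun x => indS i x * indS j x)) t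
       (- sumV N (fun k => if Nat.eq_dec k j then 0 else
           T i k * sdiv (E t (fun x => indS i x * indS j x)
                         * E t (fun x => indS i x * indI k x)) (E t (indS i)))
        - sumV N (fun k => if Nat.eq_dec k i then 0 else
           T j k * sdiv (E t (fun x => indS i x * indS j x)
                         * E t (fun x => indS j x * indI k x)) (E t (indS j))))).
Proof.
  intros E t Ht. unfold E. clear E.
  split; [intros i Hi; split|intros i j Hi Hj Hij Hadj; split].
  - eapply der_S; eauto.
  - eapply der_I; eauto.
  - eapply der_SI; eauto.
  - eapply der_SS; eauto.
Qed.
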